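(* Let $0\le\alpha<\pi/2$ and let $H\in\mathbb{M}_n(\mathbb{M}_k)$ satisfy $W(H)\subseteq S_\alpha$. Then \[ \left(\frac{\mathrm{tr}\,|\mathrm{det}_1 H|}{k}\right)^k\ge (\cos\alpha)^{nk}|\det H| \quad\text{and}\quad \left(\frac{\mathrm{tr}\,|\mathrm{det}_2 H|}{n}\right)^n\ge (\cos\alpha)^{nk}|\det H|. \]
   Context: $\mathbb{M}_n(\mathbb{M}_k)$ denotes the set of $nk\times nk$ complex matrices partitioned as $H=[H_{i,j}]_{i,j=1}^n$ with each block $H_{i,j}=[h^{i,j}_{l,m}]_{l,m=1}^k$ a $k\times k$ complex matrix. For $1\le l,m\le k$ let $G_{l,m}=[h^{i,j}_{l,m}]_{i,j=1}^n\in\mathbb{M}_n$. The partial determinants are $\mathrm{det}_1 H=[\det G_{l,m}]_{l,m=1}^k\in\mathbb{M}_k$ and $\mathrm{det}_2 H=[\det H_{i,j}]_{i,j=1}^n\in\mathbb{M}_n$. Here, for a matrix $A$, $|A|$ denotes the matrix whose entries are the absolute values of the entries of $A$ (so $\mathrm{tr}|\mathrm{det}_2H|=\sum_i|\det H_{i,i}|$). The numerical range of $A\in\mathbb{M}_p$ is $W(A)=\{x^*Ax: x\in\mathbb{C}^p, x^*x=1\}$, and for $\alpha\in[0,\pi/2)$, $S_\alpha=\{z\in\mathbb{C}: \Re z>0,\ |\Im z|\le (\Re z)\tan\alpha\}$. *)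

(* Defs.v *)
From HB Require Import structures.
From mathcomp Require Import all_boot all_order all_algebra.
Set Implicit Arguments. Unset Strict Implicit. Unset Printing Implicit Defensive.
Import Order.TTheory GRing.Theory Num.Theory.
Local Open Scope ring_scope.

Section Defs.
Variable C : numClosedFieldType.

(* H in M_n(M_k) is stored as an (n*k)x(n*k) matrix; entry h^{i,j}_{l,m}
   sits at row i*k+l and column j*k+m (mxvec_index i l = i*k + l). *)
Definition bentry n k (H : 'M[C]_(n * k)) (i j : 'I_n) (l m : 'I_k) : C :=
  H (mxvec_index i l) (mxvec_index j m).

Definition blockH n k (H : 'M[C]_(n * k)) (i j : 'I_n) : 'M[C]_k :=
  \matrix_(l, m) bentry H i j l m.

Definition Gmat n k (H : 'M[C]_(n * k)) (l m : 'I_k) : 'M[C]_n :=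
  \matrix_(i, j) bentry H i j l m.

Definition partial_det1 n k (H : 'M[C]_(n * k)) : 'M[C]_k :=
  \matrix_(l, m) \det (Gmat H l m).
Definition partial_det2 n k (H : 'M[C]_(n * k)) : 'M[C]_n :=
  \matrix_(i, j) \det (blockH H i j).

Definition absmx p (A : 'M[C]_p) : 'M[C]_p := \matrix_(i, j) `|A i j|.

Definition adjmx p q (A : 'M[C]_(p, q)) : 'M[C]_(q, p) := (map_mx Num.conj A)^T.

Definition numrange p (A : 'M[C]_p) (z : C) : Prop :=
  exists x : 'cV[C]_p, (adjmx x *m x) 0 0 = 1 /\ z = (adjmx x *m A *m x) 0 0.

(* Sector S_alpha, with alpha in [0, pi/2) encoded by ca = cos alpha and
   sa = sin alpha (ca > 0, sa >= 0, ca^2 + sa^2 = 1):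
   Re z > 0 and |Im z| <= Re z * tan alpha  (i.e. |Im z| * ca <= Re z * sa). *)
Definition sector (ca sa : C) (z : C) : Prop :=
  0 < 'Re z /\ `|'Im z| * ca <= 'Re z * sa.

End Defs.

(* Main.v *)
Set Warnings "-notation-overridden,-ambiguous-paths".
Require Import Defs.
From HB Require Import structures.
From mathcomp Require Import all_boot all_order all_algebra ring.
From mathcomp Require Import fingroup perm.
Set Implicit Arguments. Unset Strict Implicit. Unset Printing Implicit Defensive.
Import Order.TTheory GRing.Theory Num.Theory.
Local Open Scope ring_scope.

Definition qf (C : numClosedFieldType) p (A : 'M[C]_p) (v : 'rV[C]_p) : C :=
  (v *m A *m adjmx v) 0 0.

Definition ReM (C : numClosedFieldType) p (A : 'M[C]_p) : 'M[C]_p :=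
  2%:R^-1 *: (A + adjmx A).

Lemma qfE (C : numClosedFieldType) p (A : 'M[C]_p) v :
  qf A v = \sum_r \sum_c v 0 r * A r c * (v 0 c)^*.
Proof.
rewrite /qf /adjmx mxE exchange_big; apply: eq_bigr => c _.
by rewrite !mxE mulr_suml.
Qed.

Lemma qfD (C : numClosedFieldType) p (A B : 'M[C]_p) v :
  qf (A + B) v = qf A v + qf B v.
Proof. by rewrite /qf mulmxDr mulmxDl mxE. Qed.

Lemma qfZ (C : numClosedFieldType) p (a : C) (A : 'M[C]_p) v :
  qf (a *: A) v = a * qf A v.
Proof. by rewrite /qf -scalemxAr -scalemxAl mxE. Qed.

Lemma qf_adj (C : numClosedFieldType) p (A : 'M[C]_p) v :
  qf (adjmx A) v = (qf A v)^*.
Proof.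
rewrite !qfE rmorph_sum exchange_big /=; apply: eq_bigr => r _.
rewrite rmorph_sum; apply: eq_bigr => c _.
rewrite /adjmx !mxE !rmorphM /= conjCK; ring.
Qed.

Lemma qf_ReM (C : numClosedFieldType) p (A : 'M[C]_p) v :
  qf (ReM A) v = 'Re (qf A v).
Proof. by rewrite /ReM qfZ qfD qf_adj ReE mulrC. Qed.

Lemma qf_scalev (C : numClosedFieldType) p (A : 'M[C]_p) (a : C) v :
  qf A (a *: v) = a * a^* * qf A v.
Proof.
rewrite !qfE mulr_sumr; apply: eq_bigr => r _; rewrite mulr_sumr.
apply: eq_bigr => c _; rewrite !mxE rmorphM /=; ring.
Qed.

Lemma qf1_gt0 (C : numClosedFieldType) p (v : 'rV[C]_p) :
  v != 0 -> 0 < qf 1%:M v.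
Proof.
move=> vn0; rewrite qfE.
have [r0 hr0] : exists r, v 0 r != 0.
  apply/existsP; apply: contraR vn0 => /existsPn h.
  by apply/eqP/rowP => r; rewrite mxE; apply/eqP/negbNE/h.
rewrite (bigD1 r0) //= ltr_pwDl //.
- rewrite (bigD1 r0) //= big1 ?addr0; last by move=> c /negbTE h; rewrite mxE eq_sym h mulr0 mul0r.
  by rewrite mxE eqxx mulr1 mul_conjC_gt0.
- apply: sumr_ge0 => r _; rewrite (bigD1 r) //= big1 ?addr0.
    by rewrite mxE eqxx mulr1 mul_conjC_ge0.
  by move=> c /negbTE h; rewrite mxE eq_sym h mulr0 mul0r.
Qed.
Lemma eig_tool (C : numClosedFieldType) p (A : 'M[C]_p) :
  exists r : seq C, [/\ size r = p, \det A = \prod_(z <- r) z,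
     \tr A = \sum_(z <- r) z &
     forall z, z \in r -> exists2 v : 'rV_p, v *m A = z *: v & v != 0].
Proof.
have [r hr] := closed_field_poly_normal (char_poly A).
move: hr; rewrite (monicP (char_poly_monic A)) scale1r => hr.
have szr : size r = p.
  have := size_char_poly A; rewrite hr size_prod_XsubC; by case.
exists r; split => //.
- have := char_poly_det A; rewrite hr coef0_prod_XsubC szr .
  by move/(congr1 (fun x => (-1) ^+ p * x)); rewrite !signrMK.
- case: p A r hr szr => [|p] A r hr szr.
    by rewrite (size0nil szr) big_nil /mxtrace big_ord0.
  have := char_poly_trace A isT; rewrite hr => ct.
  have := coefPn_prod_XsubC (ps := r); rewrite szr => /(_ isT) h.
  by apply: oppr_inj; rewrite -ct h.
- move=> z zr; apply/eigenvalueP; rewrite eigenvalue_root_char hr.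
  by rewrite root_prod_XsubC.
Qed.

Definition secP (C : numClosedFieldType) (ca sa : C) p (A : 'M[C]_p) :=
  forall v : 'rV[C]_p, v != 0 -> sector ca sa (qf A v).

Lemma sector_scale (C : numClosedFieldType) (ca sa c z : C) :
  0 < c -> sector ca sa (c * z) -> sector ca sa z.
Proof.
move=> c0 [h1 h2]; have cr : c \is Num.real by rewrite gtr0_real.
move: h1 h2; rewrite ReMl // ImMl // normrM gtr0_norm // pmulr_rgt0 // => h1 h2.
split => //; by rewrite -(ler_pM2l c0) !mulrA.
Qed.

Lemma adjmxK (C : numClosedFieldType) p q (M : 'M[C]_(p, q)) : adjmx (adjmx M) = M.
Proof. by apply/matrixP => i j; rewrite /adjmx !mxE conjCK. Qed.

Lemma secP_of_numrange (C : numClosedFieldType) (ca sa : C) p (A : 'M[C]_p) :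
  (forall z, numrange A z -> sector ca sa z) -> secP ca sa A.
Proof.
move=> hW v vn0; set s := qf 1%:M v.
have s0 : 0 < s by exact: qf1_gt0.
set t := sqrtC s.
have t0 : 0 < t by rewrite sqrtC_gt0.
have tr : t \is Num.real by rewrite gtr0_real.
have tc : t^-1^* = t^-1 by rewrite fmorphV /= (CrealP tr).
have tt : t^-1 * t^-1^* = s^-1 by rewrite tc -invrM ?unitfE ?gt_eqF // -expr2 sqrtCK.
apply: (@sector_scale _ _ _ (s^-1)); first by rewrite invr_gt0.
apply: hW; exists (adjmx (t^-1 *: v)); rewrite adjmxK; split.
- have := qf_scalev 1%:M (t^-1) v; rewrite /qf !mulmx1 => ->; rewrite tt.
  have -> : (v *m adjmx v) 0 0 = s by rewrite /s /qf mulmx1.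
  by rewrite mulVf // gt_eqF.
- by rewrite -[RHS]/(qf A (t^-1 *: v)) qf_scalev tt.
Qed.

Lemma sector_bounds (C : numClosedFieldType) (ca sa z : C) :
  ca \is Num.real -> sa \is Num.real -> 0 < ca -> 0 <= sa -> ca ^+ 2 + sa ^+ 2 = 1 ->
  sector ca sa z -> ca * `|z| <= 'Re z /\ 'Re z <= `|z|.
Proof.
move=> car sar ca0 sa0 pyth [x0 hxy]; split; last by rewrite leif_Re_Creal.
have xr : 'Re z \is Num.real by exact: Creal_Re.
have yr : 'Im z \is Num.real by exact: Creal_Im.
have n1 : ca * `|z| \in Num.nneg by rewrite nnegrE; exact: mulr_ge0 (ltW ca0) (normr_ge0 _).
have n2 : 'Re z \in Num.nneg by rewrite nnegrE; exact: ltW.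
rewrite -(@ler_sqr _ _ _ n1 n2).
rewrite exprMn normC2_Re_Im.
have h3 : `|'Im z| * ca \in Num.nneg by rewrite nnegrE; exact: mulr_ge0 (normr_ge0 _) (ltW ca0).
have h4 : 'Re z * sa \in Num.nneg by rewrite nnegrE; exact: mulr_ge0 (ltW x0) sa0.
have := hxy; rewrite -(@ler_sqr _ _ _ h3 h4).
rewrite !exprMn real_normK // => h.
rewrite -[X in _ <= X]mul1r -pyth mulrDr mulrDl lerD2l.
by rewrite mulrC [X in _ <= X]mulrC.
Qed.

Lemma qf_rel (C : numClosedFieldType) p (A B : 'M[C]_p) (z : C) v :
  v *m A = z *: (v *m B) -> qf A v = z * qf B v.
Proof. by move=> h; rewrite /qf h -scalemxAl mxE. Qed.

Lemma pd_det (C : numClosedFieldType) p (R : 'M[C]_p) :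
  (forall v, v != 0 -> 0 < qf R v) -> 0 < \det R.
Proof.
move=> pdR; have [r [_ -> _ hr]] := eig_tool R.
rewrite big_seq_cond; apply: prodr_gt0 => z /andP[zr _]; have [v hv vn0] := hr z zr.
have e : qf R v = z * qf 1%:M v by apply: qf_rel; rewrite mulmx1.
have := pdR v vn0; rewrite e pmulr_lgt0 //; exact: qf1_gt0.
Qed.

Lemma prod_ca_seq (C : numClosedFieldType) (ca : C) (r : seq C) :
  \prod_(z <- r) (ca * `|z|) = ca ^+ size r * \prod_(z <- r) `|z|.
Proof.
elim: r => [|a r ih]; first by rewrite !big_nil mulr1.
by rewrite !big_cons ih /= exprS; ring.
Qed.

Lemma acc (C : numClosedFieldType) (ca sa : C)
  (ca_real : ca \is Num.real) (sa_real : sa \is Num.real)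
  (ca_pos : 0 < ca) (sa_nneg : 0 <= sa) (pyth : ca ^+ 2 + sa ^+ 2 = 1)
  p (A : 'M[C]_p) : secP ca sa A ->
  [/\ 0 < \det (ReM A), ca ^+ p * `|\det A| <= \det (ReM A)
    & \det (ReM A) <= `|\det A|].
Proof.
move=> hA; set R := ReM A.
have pdR : forall v, v != 0 -> 0 < qf R v.
  by move=> v vn0; rewrite qf_ReM; case: (hA v vn0).
have dR := pd_det pdR.
have Ru : R \in unitmx by rewrite unitmxE unitfE gt_eqF.
have [r [szr dM _ hr]] := eig_tool (A *m invmx R).
have hdet : `|\det A| = \det R * \prod_(z <- r) `|z|.
  have -> : \det A = \det R * \prod_(z <- r) z.
    by rewrite -dM det_mulmx det_inv mulrCA divff ?mulr1 // gt_eqF.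
  by rewrite normrM gtr0_norm // normr_prod.
have hz : forall z, z \in r -> ca * `|z| <= 1 /\ 1 <= `|z|.
  move=> z zr; have [v hv vn0] := hr z zr.
  have e : v *m A = z *: (v *m R).
    by rewrite scalemxAl -hv -mulmxA mulmxKV.
  have := qf_rel e; rewrite qf_ReM => eq.
  have [x0 _] := hA v vn0.
  have [b1 b2] := sector_bounds ca_real sa_real ca_pos sa_nneg pyth (hA v vn0).
  have nq : `|qf A v| = `|z| * 'Re (qf A v) by rewrite {1}eq normrM (gtr0_norm x0).
  rewrite nq in b1 b2; split.
    by rewrite -(ler_pM2r x0) mul1r -mulrA.
  by rewrite -(ler_pM2r x0) mul1r.
split => //.
- have pc := prod_ca_seq ca r; rewrite szr in pc.
  rewrite hdet mulrCA -pc -[X in _ <= X]mulr1; apply: ler_wpM2l; first exact: ltW.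
  rewrite big_seq_cond; apply: prodr_ile1 => z /andP[zr _].
  case: (hz z zr) => h1 _; rewrite h1 andbT; exact: mulr_ge0 (ltW ca_pos) (normr_ge0 _).
- rewrite hdet -[X in X <= _]mulr1; apply: ler_wpM2l; first exact: ltW.
  rewrite big_seq_cond.
  apply: le_trans (_ : \prod_(z <- r | (z \in r) && true) (1:C) <= _); first by rewrite big1.
  apply: ler_prod => z /andP[zr _].
  by rewrite ler01; case: (hz z zr).
Qed.

Definition maskmx (C : numClosedFieldType) p m (lab : 'I_p -> 'I_m) (A : 'M[C]_p) : 'M[C]_p :=
  \matrix_(r, c) if lab r == lab c then A r c else 0.

Lemma ReM_mask (C : numClosedFieldType) p m (lab : 'I_p -> 'I_m) (A : 'M[C]_p) :
  ReM (maskmx lab A) = maskmx lab (ReM A).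
Proof.
apply/matrixP => r c; rewrite /ReM /adjmx !mxE eq_sym.
by case: ifP => _; rewrite ?conjC0 ?addr0 ?mulr0.
Qed.

Definition wvec (C : numClosedFieldType) p m (lab : 'I_p -> 'I_m) (v : 'rV[C]_p) (i : 'I_m) :
  'rV[C]_p := \row_r (if lab r == i then v 0 r else 0).

Lemma qf_mask (C : numClosedFieldType) p m (lab : 'I_p -> 'I_m) (A : 'M[C]_p) v :
  qf (maskmx lab A) v = \sum_i qf A (wvec lab v i).
Proof.
rewrite qfE [RHS](eq_bigr _ (fun i _ => qfE _ _)).
rewrite [RHS]exchange_big /=; apply: eq_bigr => r _.
rewrite [RHS]exchange_big /=; apply: eq_bigr => c _.
rewrite (bigD1 (lab r)) //= big1 ?addr0.
  rewrite !mxE eqxx; have [e|ne] := eqVneq (lab r) (lab c).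
    by [].
  by rewrite !(mulr0, mul0r, rmorph0).
by move=> i /negbTE h; rewrite !mxE eq_sym h !mul0r.
Qed.

Definition csec (C : numClosedFieldType) (ca sa z : C) :=
  0 <= 'Re z /\ `|'Im z| * ca <= 'Re z * sa.

Lemma csec_sum (C : numClosedFieldType) (ca sa : C) (I : finType) (F : I -> C) :
  0 <= ca -> (forall i, csec ca sa (F i)) -> csec ca sa (\sum_i F i).
Proof.
move=> ca0 h; split; rewrite !raddf_sum /=.
  by apply: sumr_ge0 => i _; case: (h i).
apply: le_trans (_ : (\sum_i `|'Im (F i)|) * ca <= _).
  by apply: ler_wpM2r => //; apply: ler_norm_sum.
rewrite !mulr_suml; apply: ler_sum => i _; by case: (h i).
Qed.

Lemma secP_mask (C : numClosedFieldType) (ca sa : C) (ca_pos : 0 < ca)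
  p m (lab : 'I_p -> 'I_m) (A : 'M[C]_p) :
  secP ca sa A -> secP ca sa (maskmx lab A).
Proof.
move=> hA v vn0; rewrite qf_mask.
have hc : forall i, csec ca sa (qf A (wvec lab v i)).
  move=> i; have [->|wn0] := eqVneq (wvec lab v i) 0.
    rewrite /csec /qf mul0mx mul0mx mxE !raddf0 normr0 !mul0r; by [].
  by case: (hA _ wn0) => h1 h2; split => //; rewrite ltW.
have [h1 h2] := csec_sum (ltW ca_pos) hc; split => //.
have [r0 hr0] : exists r, v 0 r != 0.
  apply/existsP; apply: contraR vn0 => /existsPn h.
  by apply/eqP/rowP => r; rewrite mxE; apply/eqP/negbNE/h.
have wn0 : wvec lab v (lab r0) != 0.
  by apply: contraNneq hr0 => /rowP /(_ r0); rewrite !mxE eqxx => ->.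
rewrite raddf_sum (bigD1 (lab r0)) //= ltr_pwDl //.
  by case: (hA _ wn0).
by apply: sumr_ge0 => i _; case: (hc i).
Qed.

Lemma amgm_seq (C : numClosedFieldType) (r : seq C) :
  (forall z, z \in r -> 0 <= z) ->
  \prod_(z <- r) z <= ((\sum_(z <- r) z) / (size r)%:R) ^+ size r.
Proof.
move=> h.
rewrite (big_nth 0) [in X in _ <= X](big_nth 0) !big_mkord.
have := @leif_AGM C 'I_(size r) predT (fun i => nth 0 r i).
rewrite cardT size_enum_ord.
move=> /(_ _) [].
  by move=> i _; apply: h; rewrite mem_nth.
move=> hle _; exact: hle.
Qed.

Definition pdm (C : numClosedFieldType) p (R : 'M[C]_p) :=
  forall v, v != 0 -> 0 < qf R v.

Lemma fischer (C : numClosedFieldType) p m (lab : 'I_p -> 'I_m) (R : 'M[C]_p) :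
  pdm R -> pdm (maskmx lab R) -> \det R <= \det (maskmx lab R).
Proof.
move=> pdR pdD; set D := maskmx lab R.
case: p lab R pdR pdD @D => [|p] lab R pdR pdD D.
  by rewrite !det_mx00.
have dD := pd_det pdD.
have Du : D \in unitmx by rewrite unitmxE unitfE gt_eqF.
set Y := invmx D.
have Yb : forall r c, lab r != lab c -> Y r c = 0.
  move=> r c ne; set P := diag_mx (\row_t ((lab t == lab c)%:R : C)).
  have PD : P *m D = D *m P.
    apply/matrixP => a b; rewrite mul_diag_mx mul_mx_diag !mxE.
    by have [->|nab] := eqVneq (lab a) (lab b); rewrite ?mulr0 ?mul0r ?mulr1 ?mul1r //; case: (lab b == lab c); rewrite ?mulr1 ?mul1r ?mulr0 ?mul0r.
  have YP : Y *m P = P *m Y.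
    rewrite -[Y *m P]mulmx1 -(mulmxV Du) -/Y !mulmxA -[Y *m P *m D]mulmxA PD.
    by rewrite mulmxA (mulVmx Du) mul1mx.
  move/matrixP: YP => /(_ r c); rewrite mul_diag_mx mul_mx_diag !mxE eqxx mulr1.
  by rewrite (negbTE ne) mul0r.
have trM : \tr (R *m Y) = p.+1%:R.
  rewrite mxtrace_mulC -[RHS](mxtrace1 C p.+1) -(mulVmx Du) -/Y.
  rewrite /mxtrace; apply: eq_bigr => a _; rewrite !mxE.
  apply: eq_bigr => b _; rewrite /D mxE eq_sym.
  by have [//|nab] := eqVneq (lab a) (lab b); rewrite Yb // !mul0r.
have [r [szr dM tM hr]] := eig_tool (R *m Y).
have hpos : forall z, z \in r -> 0 < z.
  move=> z zr; have [v hv vn0] := hr z zr.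
  have e : v *m R = z *: (v *m D).
    by rewrite scalemxAl -hv -mulmxA mulmxKV.
  have := pdR v vn0; rewrite (qf_rel e) pmulr_lgt0 //; exact: pdD.
have := amgm_seq (fun z zr => ltW (hpos z zr)).
rewrite -dM -tM trM szr divff ?pnatr_eq0 // expr1n det_mulmx det_inv.
by rewrite ler_pdivrMr // mul1r.
Qed.

Lemma core (C : numClosedFieldType) (ca sa : C)
  (ca_real : ca \is Num.real) (sa_real : sa \is Num.real)
  (ca_pos : 0 < ca) (sa_nneg : 0 <= sa) (pyth : ca ^+ 2 + sa ^+ 2 = 1)
  p m (lab : 'I_p -> 'I_m) (A : 'M[C]_p) :
  secP ca sa A -> ca ^+ p * `|\det A| <= `|\det (maskmx lab A)|.
Proof.
move=> hA.
have [_ b1 _] := acc ca_real sa_real ca_pos sa_nneg pyth hA.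
have hD := secP_mask ca_pos lab hA.
have [_ _ b3] := acc ca_real sa_real ca_pos sa_nneg pyth hD.
rewrite ReM_mask in b3.
have pdR : pdm (ReM A) by move=> v vn0; rewrite qf_ReM; case: (hA v vn0).
have pdD : pdm (maskmx lab (ReM A)).
  by move=> v vn0; rewrite -ReM_mask qf_ReM; case: (hD v vn0).
exact: le_trans b1 (le_trans (fischer pdR pdD) b3).
Qed.

Lemma det_reindex (C : numClosedFieldType) p q (e : p = q) (f : 'I_p -> 'I_q)
  (finj : injective f) (A : 'M[C]_q) :
  \det (\matrix_(r, c) A (f r) (f c)) = \det A.
Proof.
subst q; set s := perm finj.
have -> : \matrix_(r, c) A (f r) (f c) = row_perm s (col_perm s A).
  by apply/matrixP => r c; rewrite !mxE !permE.
rewrite row_permE col_permE !det_mulmx !det_perm odd_permV.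
by rewrite mulrCA -signr_addb addbb mulr1.
Qed.

Definition unmv m k (r : 'I_(m * k)) : 'I_m * 'I_k :=
  enum_val (cast_ord (esym (mxvec_cast m k)) r).

Lemma unmvK m k (i : 'I_m) (l : 'I_k) : unmv (mxvec_index i l) = (i, l).
Proof. by rewrite /unmv /mxvec_index cast_ordK enum_rankK. Qed.

Lemma mvK m k (r : 'I_(m * k)) : mxvec_index (unmv r).1 (unmv r).2 = r.
Proof. by case/mxvec_indexP: r => i l; rewrite unmvK. Qed.

Definition fsh m k (t : 'I_(k + m * k)) : 'I_(m.+1 * k) :=
  match split t with
  | inl l => mxvec_index ord0 l
  | inr r => mxvec_index (lift ord0 (unmv r).1) (unmv r).2
  end.

Definition gsh m k (r : 'I_(m.+1 * k)) : 'I_(k + m * k) :=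
  match unlift ord0 (unmv r).1 with
  | None => lshift (m * k) (unmv r).2
  | Some i => rshift k (mxvec_index i (unmv r).2)
  end.

Lemma fshK m k : cancel (@fsh m k) (@gsh m k).
Proof.
move=> t; rewrite -[t]splitK; case: (split t) => [l|r];
  rewrite /fsh unsplitK /gsh unmvK /=.
  by rewrite unlift_none.
by rewrite liftK mvK.
Qed.

Lemma fshL m k (l : 'I_k) : fsh (lshift (m * k) l) = mxvec_index ord0 l.
Proof. by rewrite /fsh (unsplitK (inl _)). Qed.

Lemma fshR m k (i : 'I_m) (l : 'I_k) :
  fsh (rshift k (mxvec_index i l)) = mxvec_index (lift ord0 i) l.
Proof. by rewrite /fsh (unsplitK (inr _)) unmvK. Qed.

Lemma det_blockdiag (C : numClosedFieldType) m k (D : 'M[C]_(m * k)) :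
  (forall i j l l', i != j -> D (mxvec_index i l) (mxvec_index j l') = 0) ->
  \det D = \prod_(i < m) \det (\matrix_(l, l') D (mxvec_index i l) (mxvec_index i l')).
Proof.
elim: m D => [|m IH] D hD.
  by rewrite big_ord0; exact: det_mx00.
set D' := \matrix_(t, u) D (fsh t) (fsh u) : 'M[C]_(k + m * k).
have eD : \det D' = \det D.
  by rewrite /D' (det_reindex _ (can_inj (@fshK m k))) // mulSn.
rewrite -eD -[D']submxK.
have -> : dlsubmx D' = 0.
  apply/matrixP => r l; case/mxvec_indexP: r => i l'.
  by rewrite !mxE fshR fshL hD // eq_sym neq_lift.
rewrite det_ublock big_ord_recl; congr (_ * _).
  by congr (\det _); apply/matrixP => l l'; rewrite !mxE !fshL.
rewrite IH.
  apply: eq_bigr => i _; congr (\det _); apply/matrixP => l l'.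
  by rewrite !mxE !fshR.
move=> i j l l' ne; rewrite !mxE !fshR hD //.
Qed.

Lemma amgm_ord (C : numClosedFieldType) m (F : 'I_m -> C) (x : C) :
  x <= \prod_i `|F i| -> x <= ((\sum_i `|F i|) / m%:R) ^+ m.
Proof.
move=> hx; apply: le_trans hx _.
have := @leif_AGM C 'I_m predT (fun i => `|F i|).
rewrite cardT size_enum_ord => /(_ (fun i _ => normr_ge0 _)) [hle _].
exact: hle.
Qed.

Lemma unmvK1 m k (i : 'I_m) (l : 'I_k) : (unmv (mxvec_index i l)).1 = i.
Proof. by rewrite unmvK. Qed.
Lemma unmvK2 m k (i : 'I_m) (l : 'I_k) : (unmv (mxvec_index i l)).2 = l.
Proof. by rewrite unmvK. Qed.

Definition swmv n k (t : 'I_(k * n)) : 'I_(n * k) :=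
  mxvec_index (unmv t).2 (unmv t).1.

Lemma swmvK n k : cancel (@swmv n k) (@swmv k n).
Proof. by move=> t; rewrite /swmv unmvK1 unmvK2 mvK. Qed.

Theorem theorem3p7 (C : numClosedFieldType) (ca sa : C)
  (ca_real : ca \is Num.real) (sa_real : sa \is Num.real)
  (ca_pos : 0 < ca) (sa_nneg : 0 <= sa) (pyth : ca ^+ 2 + sa ^+ 2 = 1)
  (n k : nat) (H : 'M[C]_(n * k))
  (hW : forall z, numrange H z -> sector ca sa z) :
  ((\tr (absmx (partial_det1 H)) / k%:R) ^+ k >= ca ^+ (n * k) * `|\det H|)
  /\ ((\tr (absmx (partial_det2 H)) / n%:R) ^+ n >= ca ^+ (n * k) * `|\det H|).
Proof.
have hA := secP_of_numrange hW.
split.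
- have hc := core ca_real sa_real ca_pos sa_nneg pyth (fun r => (unmv r).2) hA.
  set D := maskmx _ H in hc.
  have eD : \det D = \prod_(l < k) \det (Gmat H l l).
    have e : (k * n = n * k)%N by rewrite mulnC.
    rewrite -(det_reindex e (can_inj (@swmvK n k)) D).
    rewrite det_blockdiag.
      apply: eq_bigr => l _; congr (\det _); apply/matrixP => i j.
      by rewrite /Gmat /D /swmv !mxE !(unmvK1, unmvK2) eqxx.
    move=> l l' i j ne; rewrite /D /swmv !mxE !(unmvK1, unmvK2).
    by rewrite (negbTE ne).
  have -> : \tr (absmx (partial_det1 H)) = \sum_l `|\det (Gmat H l l)|.
    by rewrite /mxtrace; apply: eq_bigr => l _; rewrite !mxE.
  apply: amgm_ord; by rewrite -normr_prod -eD.
- have hc := core ca_real sa_real ca_pos sa_nneg pyth (fun r => (unmv r).1) hA.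
  set D := maskmx _ H in hc.
  have eD : \det D = \prod_(i < n) \det (blockH H i i).
    rewrite det_blockdiag.
      apply: eq_bigr => i _; congr (\det _); apply/matrixP => l l'.
      by rewrite /blockH /D !mxE !(unmvK1, unmvK2) eqxx.
    move=> i j l l' ne; rewrite /D !mxE !(unmvK1, unmvK2).
    by rewrite (negbTE ne).
  have -> : \tr (absmx (partial_det2 H)) = \sum_i `|\det (blockH H i i)|.
    by rewrite /mxtrace; apply: eq_bigr => i _; rewrite !mxE.
  apply: amgm_ord; by rewrite -normr_prod -eD.
Qed.
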